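(* Let $\mathbf k$ be a field, $V$ a finite-dimensional $\mathbf k$-vector space with a nondegenerate quadratic form $Q$, and let $N\in\tilde{\mathcal M}_Q$, $N\ne0$. Let $e\ge2$ be the smallest integer with $N^e=0$, and let $E$ be a complement to $\ker N^{e-1}$ in $V$. Then the linear map $E^{\oplus e}\to V$, $(v_0,v_1,\dots,v_{e-1})\mapsto v_0+Nv_1+\cdots+N^{e-1}v_{e-1}$, is injective, and the restriction of $\langle,\rangle$ to its image $W=E+NE+\cdots+N^{e-1}E$ has zero radical.
   Context: $\langle x,y\rangle=Q(x+y)-Q(x)-Q(y)$, with radical $R=\{x:\langle x,V\rangle=0\}$; $Q$ is nondegenerate if $Q|_R$ is injective. $\tilde{\mathcal M}_Q$ is the set of nilpotent $N\in\mathrm{End}(V)$ with $Q(Nx)=-\langle x,Nx\rangle$ for all $x\in V$. *)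

(* Defs.v *)
From HB Require Import structures.
From mathcomp Require Import all_boot all_order all_algebra.
Set Implicit Arguments. Unset Strict Implicit. Unset Printing Implicit Defensive.
Import GRing.Theory.
Local Open Scope ring_scope.

Section QF.
Variables (K : fieldType) (V : vectType K).

Definition polar (Q : V -> K) (x y : V) : K := Q (x + y) - Q x - Q y.

Definition is_quadratic_form (Q : V -> K) : Prop :=
  [/\ forall (a : K) (x : V), Q (a *: x) = a ^+ 2 * Q x,
      forall x y z : V, polar Q (x + y) z = polar Q x z + polar Q y z
    & forall (a : K) (x y : V), polar Q (a *: x) y = a * polar Q x y].

Definition in_radical (Q : V -> K) (x : V) : Prop := forall y : V, polar Q x y = 0.

Definition qf_nondegenerate (Q : V -> K) : Prop :=
  forall x y : V, in_radical Q x -> in_radical Q y -> Q x = Q y -> x = y.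

Definition lpow (f : 'End(V)) (n : nat) : 'End(V) :=
  iter n (fun g => (f \o g)%VF) \1%VF.

Definition nilpotent_end (f : 'End(V)) : Prop := exists n : nat, lpow f n = 0.

Definition in_tildeM (Q : V -> K) (N : 'End(V)) : Prop :=
  nilpotent_end N /\ forall x : V, Q (N x) = - polar Q x (N x).

End QF.

(* Main.v *)
Require Import Defs.
From HB Require Import structures.
From mathcomp Require Import all_boot all_order all_algebra.
From mathcomp Require Import ring zify.
Set Implicit Arguments.
Import GRing.Theory.
Local Open Scope ring_scope.

Section Helpers.
Variables (K : fieldType) (V : vectType K) (Q : V -> K) (N : 'End(V)).
Local Notation B := (polar Q).
Local Notation P := (lpow N).

Lemma lp0 x : P 0 x = x. Proof. by rewrite /lpow /= id_lfunE. Qed.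
Lemma lpS n x : P n.+1 x = N (P n x). Proof. by rewrite /lpow iterS comp_lfunE. Qed.
Lemma lpD m n x : P (m + n) x = P m (P n x).
Proof. by elim: m => [|m IH]; rewrite ?add0n ?lp0 // addSn !lpS IH. Qed.
Lemma lpge e n x : P e = 0 -> (e <= n)%N -> P n x = 0.
Proof. by move=> He hn; rewrite -(subnK hn) lpD He zero_lfunE linear0. Qed.

Lemma Bsym x y : B x y = B y x.
Proof. rewrite /polar [y + x]addrC; ring. Qed.

Variable hQ : is_quadratic_form Q.
Lemma BDl x y z : B (x + y) z = B x z + B y z. Proof. by case: hQ. Qed.
Lemma BZl a x y : B (a *: x) y = a * B x y. Proof. by case: hQ. Qed.
Lemma BDr x y z : B x (y + z) = B x y + B x z.
Proof. by rewrite Bsym BDl !(Bsym _ x). Qed.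
Lemma B0l y : B 0 y = 0.
Proof. by have := BZl 0 0 y; rewrite scale0r mul0r. Qed.
Lemma B0r y : B y 0 = 0.
Proof. by rewrite Bsym B0l. Qed.
Lemma Q0 : Q 0 = 0.
Proof. by case: hQ => hZ _ _; have := hZ 0 0; rewrite scale0r expr0n /= mul0r. Qed.

Lemma Bsum_l (I : finType) (f : I -> V) y :
  B (\sum_i f i) y = \sum_i B (f i) y.
Proof.
exact: (big_morph (fun x => B x y) (fun a b => BDl a b y) (B0l y)).
Qed.

Variable hN : forall x, Q (N x) = - B x (N x).

Lemma keyrel x y : B (N x) (N y) + B x (N y) + B (N x) y = 0.
Proof.
have h := hN (x + y); rewrite linearD /= in h.
have e1 : B (N x) (N y) = Q (N x + N y) - Q (N x) - Q (N y) by [].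
rewrite e1 h !hN !BDl !BDr (Bsym y (N x)); ring.
Qed.

Variable e : nat.
Variable He : P e = 0.

Lemma vanish i k a b : (e <= i + k)%N -> B (P i a) (P k b) = 0.
Proof.
elim: i k => [|i IH] k hik.
  by rewrite (lpge _ _ b He) ?B0r // -(add0n k).
suff: forall m k, (e <= i.+1 + k)%N -> (e <= k + m)%N -> B (P i.+1 a) (P k b) = 0.
  by move=> /(_ e k hik); apply; rewrite leq_addl.
elim=> [|m IHm] k' h1 h2.
  by rewrite (lpge _ _ b He) ?B0r // -(addn0 k').
case: (leqP e k') => hek; first by rewrite (lpge _ _ b He) ?B0r.
have rel := keyrel (P i a) (P k' b); rewrite -!lpS in rel.
rewrite IHm ?IH ?add0r in rel => //; try lia.
Qed.

Lemma anti j k a b : (j + k).+1 = e ->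
  B (P j a) (P k b) = (-1) ^+ j * B a (P (j + k) b).
Proof.
elim: j k => [|j IH] k hjk; first by rewrite lp0 expr0 mul1r add0n.
have rel := keyrel (P j a) (P k b); rewrite -!lpS in rel.
rewrite vanish in rel; last lia.
rewrite IH in rel; last lia.
rewrite addSn -addnS.
move/eqP: rel; rewrite add0r addrC addr_eq0 => /eqP ->.
by rewrite exprS mulN1r mulNr.
Qed.

Variable hnd : qf_nondegenerate Q.
Variable E : {vspace V}.
Variable He2 : (2 <= e)%N.
Variable hcap : (E :&: lker (lpow N e.-1))%VS = 0%VS.
Variable hfull : (E + lker (lpow N e.-1))%VS = fullv.

Lemma Bprime v : v \in E -> (forall z, z \in E -> B v (P e.-1 z) = 0) -> v = 0.
Proof.
move=> vE hz.
set u := P e.-1 v.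
have hu : in_radical Q u.
  move=> w; have: w \in (E + lker (P e.-1))%VS by rewrite hfull memvf.
  case/memv_addP => z zE [k hk ->].
  rewrite BDr.
  have h1 := anti e.-1 0 v z; rewrite lp0 addn0 in h1.
  have h2 := anti e.-1 0 v k; rewrite lp0 addn0 in h2.
  rewrite /u h1 ?h2; try lia.
  rewrite hz // memv_ker in hk *; rewrite (eqP hk) B0r; ring.
have hQu : Q u = 0.
  have ee : e.-1 = (e.-2).+1 by lia.
  rewrite /u ee lpS hN -lpS -ee -/u Bsym hu; ring.
have u0 : u = 0.
  apply: hnd => //; first by move=> y; apply: B0l.
  by rewrite hQu Q0.
have : v \in (E :&: lker (P e.-1))%VS by rewrite memv_cap vE memv_ker -/u u0 eqxx.
by rewrite hcap memv0 => /eqP.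
Qed.

End Helpers.

Theorem mainTheorem9 (K : fieldType) (V : vectType K) (Q : V -> K)
  (N : 'End(V)) (e : nat) (E : {vspace V}) :
  is_quadratic_form Q -> qf_nondegenerate Q ->
  in_tildeM Q N -> N != 0 ->
  (2 <= e)%N -> lpow N e = 0 -> (forall m : nat, lpow N m = 0 -> (e <= m)%N) ->
  (E :&: lker (lpow N e.-1))%VS = 0%VS ->
  (E + lker (lpow N e.-1))%VS = fullv ->
  (forall v w : {ffun 'I_e -> V},
      (forall i, v i \in E) -> (forall i, w i \in E) ->
      \sum_(i < e) lpow N i (v i) = \sum_(i < e) lpow N i (w i) -> v = w)
  /\
  (forall x : V, x \in (\sum_(i < e) (lpow N i @: E))%VS ->
      (forall y : V, y \in (\sum_(i < e) (lpow N i @: E))%VS -> polar Q x y = 0) ->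
      x = 0).
Proof.
move=> hQ hnd [_ hN] _ He2 He _ hcap hfull; split.
- move=> v w vE wE hs.
  pose d i := v i - w i.
  have dE i : d i \in E by apply: memvB.
  have hd : \sum_(i < e) lpow N i (d i) = 0.
    rewrite /d; under eq_bigr do rewrite linearB.
    by rewrite sumrB hs subrr.
  suff: forall n (i : 'I_e), (i < n)%N -> d i = 0.
    move=> h; apply/ffunP => i; apply/eqP; rewrite -subr_eq0; apply/eqP.
    exact: (h e).
  elim=> [|n IH] i // hi.
  case: (ltnP i n) => hin; first exact: IH.
  have hin' : (nat_of_ord i = n) by lia.
  have := congr1 (lpow N (e.-1 - i)) hd.
  rewrite linear0 linear_sum (bigD1 i) //= big1 ?addr0.
    rewrite -lpD subnK; last by have := ltn_ord i; lia.
    move=> h; have : d i \in (E :&: lker (lpow N e.-1))%VS.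
      by rewrite memv_cap dE memv_ker h eqxx.
    by rewrite hcap memv0 => /eqP.
  move=> i' ne; case: (ltngtP i' i) => hii.
  + by rewrite IH ?linear0 //; lia.
  + by rewrite -lpD (@lpge _ _ N _ _ _ He) //; have := ltn_ord i; lia.
  + by move: ne; rewrite (val_inj hii) eqxx.
- move=> x /memv_sumP [vs hvs ->] hrad.
  have: forall i : 'I_e, exists u, u \in E /\ vs i = lpow N i u.
    by move=> i; have /memv_imgP [u uE ->] := hvs i isT; exists u.
  case/fin_all_exists => w hw.
  have hsum : \sum_(i < e) vs i = \sum_(i < e) lpow N i (w i).
    by apply: eq_bigr => i _; case: (hw i).
  rewrite hsum in hrad *.
  suff: forall n (i : 'I_e), (i < n)%N -> w i = 0.
    by move=> h; apply: big1 => i _; rewrite (h e) ?linear0.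
  elim=> [|n IH] i // hi.
  case: (ltnP i n) => hin; first exact: IH.
  have hin' : (nat_of_ord i = n) by lia.
  have hie := ltn_ord i.
  have ord : (e.-1 - i < e)%N by lia.
  apply: (Bprime N hQ hN e He hnd He2 hcap hfull); first by case: (hw i).
  move=> z zE.
  have hy : lpow N (e.-1 - i) z \in (\sum_(i < e) (lpow N i @: E))%VS.
    apply: (subvP (sumv_sup (Ordinal ord) isT (subvv _))).
    exact: memv_img.
  have := hrad _ hy.
  rewrite (Bsum_l hQ) (bigD1 i) //= big1 ?addr0.
    rewrite (anti N hQ hN He); last by lia.
    rewrite subnKC; last by lia.
    move/eqP; rewrite mulf_eq0 signr_eq0 /= => /eqP //.
  move=> i' ne; case: (ltngtP i' i) => hii.
  + by rewrite IH ?linear0 ?B0l //; lia.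
  + by rewrite (vanish N hQ hN e He) //; lia.
  + by move: ne; rewrite (val_inj hii) eqxx.
Qed.
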